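(* Let $R$ be a ring (associative with identity) and let $F$ be a free right $R$-module isomorphic to the direct sum of $\alpha$ copies of $R$, where $\alpha\geq 2$ is a (finite or infinite) cardinal number. Then the endomorphism ring $\mathrm{End}_R(F)$ is 2-clean.
   Context: For a positive integer $n$, an element $a$ of a ring $S$ is called $n$-clean if $a=e+u_1+\cdots+u_n$ for some idempotent $e=e^2\in S$ and units $u_1,\dots,u_n$ of $S$; a ring is $n$-clean if each of its elements is $n$-clean. All rings are associative with identity and modules are unitary. *)

(* Defs.v *)
From mathcomp Require Import all_boot all_order all_algebra.
Set Implicit Arguments. Unset Strict Implicit. Unset Printing Implicit Defensive.
Import GRing.Theory.
Local Open Scope ring_scope.

(* The free right R-module R^(I) = direct sum of |I| copies of R, realised as
   finitely supported functions I -> R, with right scalar multiplication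
   (x r)_i = x_i r. *)
Section FreeModule.
Variables (R : pzRingType) (I : Type).

Definition fsupp (x : I -> R) : Prop :=
  exists n (g : 'I_n -> I), forall i, x i <> 0 -> exists k, g k = i.

Lemma fsupp0 : fsupp (fun _ => 0).
Proof. by exists 0%N, (fun k : 'I_0 => False_rect I (notF (ltn_ord k))). Qed.

Lemma fsupp_add x y : fsupp x -> fsupp y -> fsupp (fun i => x i + y i).
Proof.
move=> [n [g Hg]] [m [h Hh]].
exists (n + m)%N, (fun k => match split k with inl a => g a | inr b => h b end).
move=> i Hi.
have [Hx|Hx] := boolP (x i == 0).
- have Hy : y i <> 0 by move: Hi; rewrite (eqP Hx) add0r.
  have [k <-] := Hh i Hy; exists (unsplit (inr k)); by rewrite unsplitK.
- have [k <-] := Hg i (elimN eqP Hx); exists (unsplit (inl k)); by rewrite unsplitK.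
Qed.

Lemma fsupp_scale x (r : R) : fsupp x -> fsupp (fun i => x i * r).
Proof.
move=> [n [g Hg]]; exists n, g => i Hi; apply: Hg => Hx; apply: Hi.
by rewrite Hx mul0r.
Qed.

Definition free_mod := {x : I -> R | fsupp x}.

Definition addF (x y : free_mod) : free_mod :=
  exist _ (fun i => sval x i + sval y i) (fsupp_add (proj2_sig x) (proj2_sig y)).

Definition scaleF (x : free_mod) (r : R) : free_mod :=
  exist _ (fun i => sval x i * r) (fsupp_scale r (proj2_sig x)).

(* The ring End_R(R^(I)) has addition
   (f + g) x = f x + g x, multiplication given by composition, identity id. *)
Definition is_endo (f : free_mod -> free_mod) : Prop :=
  (forall x y, f (addF x y) = addF (f x) (f y)) /\
  (forall x r, f (scaleF x r) = scaleF (f x) r).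

Definition endo_idempotent (e : free_mod -> free_mod) : Prop :=
  is_endo e /\ forall x, e (e x) = e x.

Definition endo_unit (u : free_mod -> free_mod) : Prop :=
  is_endo u /\ exists v, is_endo v /\ (forall x, u (v x) = x) /\ (forall x, v (u x) = x).

Definition endo_n_clean (n : nat) (f : free_mod -> free_mod) : Prop :=
  exists (e : free_mod -> free_mod) (u : 'I_n -> free_mod -> free_mod),
    endo_idempotent e /\ (forall k, endo_unit (u k)) /\
    forall x, f x = foldr (fun k acc => addF (u k x) acc) (e x) (enum 'I_n).

Definition End_free_n_clean (n : nat) : Prop :=
  forall f, is_endo f -> endo_n_clean n f.

End FreeModule.

(* Main.v *)
From HB Require Import structures.
Require Import Defs.
From mathcomp Require Import all_boot all_order all_algebra.
From mathcomp Require Import boolp classical_sets.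
From Stdlib Require Import ClassicalEpsilon.
Set Implicit Arguments. Unset Strict Implicit. Unset Printing Implicit Defensive.
Import GRing.Theory.
Local Open Scope ring_scope.
Section Abstract.
Variable T : pzRingType.

Definition unitT (u : T) := exists v, u * v = 1 /\ v * u = 1.

Lemma unitT_mul a b : unitT a -> unitT b -> unitT (a * b).
Proof.
move=> [a' [h1 h2]] [b' [h3 h4]]; exists (b' * a'); split.
- by rewrite mulrA -(mulrA a) h3 mulr1 h1.
- by rewrite mulrA -(mulrA b') h2 mulr1 h4.
Qed.

Lemma unitT_nil n : n * n = 0 -> unitT (1 + n).
Proof.
move=> h; exists (1 - n); split.
- by rewrite mulrDl mul1r mulrBr mulr1 h subr0 subrK.
- by rewrite mulrBl mul1r mulrDr mulr1 h addr0 addrK.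
Qed.

Lemma unitT_inv2 m : m * m = 1 -> unitT m.
Proof. by move=> h; exists m. Qed.

Lemma zr (u a b : T) : a * b = 0 -> u * a * b = 0.
Proof. by move=> h; rewrite -mulrA h mulr0. Qed.
Lemma er (u a b c : T) : a * b = c -> u * a * b = u * c.
Proof. by move=> h; rewrite -mulrA h. Qed.

Ltac bring b := repeat first [progress rewrite (addrCA _ b) | progress rewrite (addrC _ b)].
Ltac anorm := rewrite ?opprD ?opprK ?oppr0 ?addr0 ?add0r -?addrA.
Ltac cancel1 := match goal with |- context [ - ?a ] => bring a; bring (- a); rewrite ?addKr ?addNr end.
Ltac asolve := apply/eqP; rewrite -subr_eq0; apply/eqP; anorm; repeat (progress cancel1; anorm); try reflexivity.

Lemma test (a b c : T) : a - (b + (a - c)) + b = c.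
Proof. asolve. Qed.

Variables (p j k s t sg tg : T).
Hypotheses (pp : p * p = p) (jj : j * j = j) (kk : k * k = k)
  (pj : p * j = 0) (jp : j * p = 0) (pk : p * k = 0) (kp : k * p = 0)
  (jk : j * k = 0) (kj : k * j = 0) (sum1 : p + j + k = 1)
  (ps : p * s = s) (sj : s * j = s) (jt : j * t = t) (tp : t * p = t)
  (st : s * t = p) (ts : t * s = j)
  (jsg : j * sg = sg) (sgk : sg * k = sg) (ktg : k * tg = tg) (tgj : tg * j = tg)
  (tgsg : tg * sg = k).

Lemma decomp f : exists e u1 u2, e * e = e /\ unitT u1 /\ unitT u2 /\ f = e + u1 + u2.
Proof.
have [q qE] : {q : T | q = j + k} := exist _ _ erefl.
have pq : p * q = 0 by rewrite qE mulrDr pj pk addr0.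
have qp : q * p = 0 by rewrite qE mulrDl jp kp addr0.
have pq1 : p + q = 1 by rewrite qE addrA.
have [d dE] : {d : T | d = q * f * q} := exist _ _ erefl.
have [eta etaE] : {e : T | e = k * d * k - k - k} := exist _ _ erefl.
have [w wE] : {w : T | w = j + k + sg + eta * tg + eta} := exist _ _ erefl.
have [y yE] : {y : T | y = d - w} := exist _ _ erefl.
have [alpha alphaE] : {a : T | a = p * f * p - p - p} := exist _ _ erefl.
have [x xE] : {x : T | x = alpha * s} := exist _ _ erefl.
have [z zE] : {z : T | z = p * f * q - s - x * y} := exist _ _ erefl.
have [c' cE] : {c : T | c = q * f * p - t} := exist _ _ erefl.
have psg : p * sg = 0 by rewrite -jsg mulrA pj mul0r.
have peta : p * eta = 0 by rewrite etaE !mulrBr !mulrA pk !mul0r !subr0.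
have etak : eta * k = eta by rewrite etaE !mulrBl -!mulrA kk.
have keta : k * eta = eta by rewrite etaE !mulrBr !mulrA kk.
have pd : p * d = 0 by rewrite dE !mulrA pq !mul0r.
have dp : d * p = 0 by rewrite dE -!mulrA qp !mulr0.
have pw : p * w = 0.
  by rewrite wE !mulrDr pj pk psg mulrA peta mul0r !addr0.
have sgp : sg * p = 0 by rewrite -sgk -mulrA kp mulr0.
have tgp : tg * p = 0 by rewrite -tgj -mulrA jp mulr0.
have etap : eta * p = 0 by rewrite -etak -mulrA kp mulr0.
have wp : w * p = 0.
  by rewrite wE !mulrDl jp kp sgp -mulrA tgp mulr0 etap !addr0.
have py : p * y = 0 by rewrite yE mulrBr pd pw subr0.
have yp : y * p = 0 by rewrite yE mulrBl dp wp subr0.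
have yq : y = q * y * q.
  have h : y = (p + q) * y * (p + q) by rewrite pq1 mul1r mulr1.
  rewrite {1}h -mulrA (mulrDr y) yp add0r mulrDl (mulrA p) py mul0r add0r.
  by rewrite mulrA.
have kq : k * q = k by rewrite qE mulrDr kj kk add0r.
have qk : q * k = k by rewrite qE mulrDl jk kk add0r.
have kd : k * d * k = k * f * k by rewrite dE !mulrA kq -!mulrA qk.
have kw : k * w * k = k + eta.
  rewrite wE !mulrDr !mulrDl kj mul0r add0r kk kk.
  rewrite -(mulrA k sg) sgk -{1}jsg mulrA kj mul0r addr0.
  rewrite -(mulrA k (eta * tg)) -(mulrA eta tg k) -tgj -(mulrA tg j k) jk !mulr0 ?mul0r addr0.
  by rewrite keta etak.
have kyk : k * y * k = k.
  rewrite yE mulrBr mulrBl kw etaE.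
  by rewrite [k + _]addrC subrK opprB addrC subrK.
have sp : s * p = 0 by rewrite -sj -mulrA jp mulr0.
have sk : s * k = 0 by rewrite -sj -mulrA jk mulr0.
have ss : s * s = 0 by rewrite -{2}ps mulrA sp mul0r.
have tj : t * j = 0 by rewrite -tp -mulrA pj mulr0.
have tk : t * k = 0 by rewrite -tp -mulrA pk mulr0.
have tt : t * t = 0 by rewrite -{2}jt mulrA tj mul0r.
have ks : k * s = 0 by rewrite -ps mulrA kp mul0r.
have kt : k * t = 0 by rewrite -jt mulrA kj mul0r.
have MM : (s + t + k) * (s + t + k) = 1.
  rewrite !mulrDl !mulrDr ss st sk ts tt tk ks kt kk !add0r !addr0.
  exact: sum1.
have stepA : (1 + j * y * k) * (s + t + k) = s + t + k + j * y * k.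
  by rewrite mulrDl mul1r !mulrDr (zr _ ks) (zr _ kt) (er _ kk) !add0r.
have ty : t * y = 0 by rewrite -tp -mulrA py mulr0.
have stepB : (1 + y * t) * (s + t + k + j * y * k) = s + t + k + j * y * k + y * j.
  rewrite mulrDl mul1r !mulrDr (er _ ts) (zr _ tt) (zr _ tk) !mulrA (zr _ tj) !mul0r.
  by rewrite !addr0.
have stepC : s + t + k + j * y * k + y * j = s + t + y.
  rewrite -!addrA; congr (_ + (_ + _)).
  have -> : y * j = j * y * j + k * y * j.
    by rewrite {1}yq qE -!mulrA (mulrDl j k j) jj kj addr0 mulrDl !mulrA.
  have yexp : y = j * y * j + j * y * k + k * y * j + k * y * k.
    by rewrite {1}yq qE !mulrDl !mulrDr !addrA.
  rewrite [RHS]yexp kyk.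
  by rewrite addrC (addrCA (j * y * k)) !addrA.
have salpha : s * alpha = 0.
  by rewrite alphaE !mulrBr !mulrA sp !mul0r !subr0.
have xx : x * x = 0.
  by rewrite xE mulrA -(mulrA alpha s alpha) salpha mulr0 mul0r.
have ytyt : (y * t) * (y * t) = 0.
  by rewrite mulrA -(mulrA y t y) ty mulr0 mul0r.
have jykjyk : (j * y * k) * (j * y * k) = 0.
  by rewrite !mulrA (zr _ kj) !mul0r.
have alphap : alpha * p = alpha.
  by rewrite alphaE !mulrBl pp -mulrA pp.
have palpha : p * alpha = alpha.
  by rewrite alphaE !mulrBr !mulrA pp.
have stepD : (1 + x) * (s + t + y) = s + t + y + alpha + x * y.
  rewrite mulrDl mul1r !mulrDr xE (zr _ ss) (er _ st) alphap add0r.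
  by rewrite addrA.
have U1unit : unitT (s + t + y + alpha + x * y).
  rewrite -stepD -stepC -stepB -stepA.
  apply: unitT_mul; first exact: unitT_nil.
  apply: unitT_mul; first exact: unitT_nil.
  apply: unitT_mul; first exact: unitT_nil.
  exact: unitT_inv2.
have sgj : sg * j = 0 by rewrite -sgk -mulrA kj mulr0.
have sgsg : sg * sg = 0 by rewrite -{2}jsg mulrA sgj mul0r.
have jeta : j * eta = 0 by rewrite -keta mulrA jk mul0r.
have tgeta : tg * eta = 0 by rewrite -tgj -mulrA jeta mulr0.
have etatg2 : (eta * tg) * (eta * tg) = 0.
  by rewrite mulrA -(mulrA eta tg eta) tgeta mulr0 mul0r.
have pt : p * t = 0 by rewrite -jt mulrA pj mul0r.
have pc : p * c' = 0.
  by rewrite cE mulrBr !mulrA pq !mul0r pt subr0.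
have cp : c' * p = c'.
  by rewrite cE mulrBl tp -mulrA pp.
have cc : c' * c' = 0 by rewrite -{1}cp -mulrA pc mulr0.
have csg : c' * sg = 0 by rewrite -cp -mulrA psg mulr0.
have ceta : c' * eta = 0 by rewrite -cp -mulrA peta mulr0.
have stepU2 : (1 + c') * ((1 + eta * tg) * (1 + sg)) = 1 + sg + eta * tg + eta + c'.
  have -> : (1 + eta * tg) * (1 + sg) = 1 + sg + eta * tg + eta.
    by rewrite mulrDl mul1r mulrDr mulr1 (er _ tgsg) etak !addrA.
  by rewrite mulrDl mul1r !mulrDr mulr1 csg mulrA ceta mul0r !addr0.
have U2unit : unitT (1 + sg + eta * tg + eta + c').
  rewrite -stepU2.
  apply: unitT_mul; first exact: unitT_nil.
  apply: unitT_mul; first exact: unitT_nil.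
  exact: unitT_nil.
have pz : p * z = z.
  by rewrite zE xE !mulrBr !mulrA pp ps palpha.
have zp : z * p = 0.
  by rewrite zE !mulrBl -!mulrA qp yp sp !mulr0 !subr0.
have zz : z * z = 0 by rewrite -{2}pz mulrA zp mul0r.
exists (p + z), (s + t + y + alpha + x * y), (1 + sg + eta * tg + eta + c').
split.
  by rewrite mulrDl !mulrDr pp pz zp zz !addr0.
split; first exact: U1unit.
split; first exact: U2unit.
have fexp : f = p * f * p + p * f * q + q * f * p + q * f * q.
  transitivity ((p + q) * f * (p + q)); first by rewrite pq1 mul1r mulr1.
  by rewrite !mulrDl !mulrDr !addrA.
move: (x * y) => X in zE *.
rewrite {1}fexp zE yE dE alphaE cE wE -sum1.
move: (p * f * p) (p * f * q) (q * f * p) (q * f * q) (eta * tg) => A B C D E.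
asolve.
Qed.
End Abstract.
Local Close Scope ring_scope.
Inductive role := rP | rJ | rK.

Lemma matching (I : Type) (i1 i2 : I) : i1 <> i2 ->
  exists (rl : I -> role) (pt : I -> I) (kel : option I) (p0 : I),
  [/\ forall i, rl i = rP -> rl (pt i) = rJ /\ pt (pt i) = i,
      forall i, rl i = rJ -> rl (pt i) = rP /\ pt (pt i) = i,
      forall i, rl i = rK <-> kel = Some i &
      rl p0 = rP].
Proof.
move=> i12.
pose P := fun A : set (I * I) =>
  [/\ forall i l l', A (i, l) -> A (i, l') -> l = l',
      forall i i' l, A (i, l) -> A (i', l) -> i = i' &
      forall i l l', A (i, l) -> A (l', i) -> False].
have [A [[Af Ai Ad] Amax]] : exists A, P A /\ forall B, (A `<` B)%classic -> ~ P B.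
  apply: Zorn_bigcup => F FP Ftot.
  have common : forall X Y z w, F X -> F Y -> X z -> Y w ->
      exists Z, [/\ F Z, Z z & Z w].
    move=> X Y z w FX FY Xz Yw; case: (Ftot X Y FX FY) => [XY|YX].
    - by exists Y; split => //; apply: XY.
    - by exists X; split => //; apply: YX.
  split.
  - move=> i l l' [X FX Xa] [Y FY Yb].
    have [Z [FZ Za Zb]] := common _ _ _ _ FX FY Xa Yb.
    by have [h _ _] := FP _ FZ; apply: h Za Zb.
  - move=> i i' l [X FX Xa] [Y FY Yb].
    have [Z [FZ Za Zb]] := common _ _ _ _ FX FY Xa Yb.
    by have [_ h _] := FP _ FZ; apply: h Za Zb.
  - move=> i l l' [X FX Xa] [Y FY Yb].
    have [Z [FZ Za Zb]] := common _ _ _ _ FX FY Xa Yb.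
    by have [_ _ h] := FP _ FZ; apply: h Za Zb.
pose isP i := exists l, A (i, l).
pose isJ i := exists l, A (l, i).
have unm : forall u v, ~ isP u -> ~ isJ u -> ~ isP v -> ~ isJ v -> u = v.
  move=> u v Pu Ju Pv Jv; apply: contrapT => uv.
  pose B := fun z : I * I => A z \/ (z.1 = u /\ z.2 = v).
  apply: (Amax B).
    split; first by move=> z Az; left.
    move=> BA; have h := BA (u, v) (or_intror (conj erefl erefl)).
    by apply: Pu; exists v.
  split.
  - move=> i l l' [h1|[/= e1 e2]] [h2|[/= e3 e4]].
    + exact: Af h1 h2.
    + by exfalso; apply: Pu; rewrite -e3; exists l.
    + by exfalso; apply: Pu; rewrite -e1; exists l'.
    + by rewrite e2 e4.
  - move=> i i' l [h1|[/= e1 e2]] [h2|[/= e3 e4]].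
    + exact: Ai h1 h2.
    + by exfalso; apply: Jv; rewrite -e4; exists i.
    + by exfalso; apply: Jv; rewrite -e2; exists i'.
    + by rewrite e1 e3.
  - move=> i l l' [h1|[/= e1 e2]] [h2|[/= e3 e4]].
    + exact: Ad h1 h2.
    + by apply: Pv; rewrite -e4; exists l.
    + by apply: Ju; rewrite -e1; exists l'.
    + by apply: uv; rewrite -e1 e4.
have inh : inhabited I := inhabits i1.
pose rl i := if pselect (isP i) then rP else if pselect (isJ i) then rJ else rK.
pose pt i := if pselect (isP i) then epsilon inh (fun l => A (i, l))
             else epsilon inh (fun l => A (l, i)).
have rlP i : rl i = rP <-> isP i.
  by rewrite /rl; case: pselect => //; case: pselect.
have rlJ i : rl i = rJ <-> (~ isP i /\ isJ i).
  rewrite /rl; case: pselect => h1; first by split => // -[].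
  by case: pselect => h2; split => // -[].
have rlK i : rl i = rK <-> (~ isP i /\ ~ isJ i).
  rewrite /rl; case: pselect => h1; first by split => // -[].
  by case: pselect => h2; split => // -[].
pose kel := if pselect (exists x, rl x = rK) then Some (epsilon inh (fun x => rl x = rK)) else None.
have [[a b] Aab] : exists z, A z.
  apply: contrapT => nA.
  have nP : forall i, ~ isP i by move=> i [l h]; apply: nA; exists (i, l).
  have nJ : forall i, ~ isJ i by move=> i [l h]; apply: nA; exists (l, i).
  by apply: i12; apply: unm.
have ptP i : isP i -> pt i = epsilon inh (fun l => A (i, l)).
  by rewrite /pt; case: pselect.
have ptN i : ~ isP i -> pt i = epsilon inh (fun l => A (l, i)).
  by rewrite /pt; case: pselect.
exists rl, pt, kel, a; split.
- move=> i /rlP hi; rewrite (ptP _ hi).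
  have hl := epsilon_spec inh _ hi; simpl in hl.
  set l := epsilon inh _ in hl *.
  have nPl : ~ isP l by move=> [m hm]; exact: (Ad _ _ _ hm hl).
  split; first by apply/rlJ; split => //; exists i.
  rewrite (ptN _ nPl).
  have hm := epsilon_spec inh (fun m => A (m, l)) (ex_intro _ i hl).
  exact: Ai hm hl.
- move=> i /rlJ [nPi hi]; rewrite (ptN _ nPi).
  have hm := epsilon_spec inh _ hi; simpl in hm.
  set m := epsilon inh _ in hm *.
  have Pm : isP m by exists i.
  split; first by apply/rlP.
  rewrite (ptP _ Pm).
  have hl := epsilon_spec inh (fun l => A (m, l)) Pm.
  exact: Af hl hm.
- move=> i; rewrite /kel; case: pselect => h.
  + have hx := epsilon_spec inh _ h.
    set x := epsilon inh _ in hx *.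
    split; last by case=> <-.
    move=> hi; congr Some.
    have [? ?] := proj1 (rlK _) hx; have [? ?] := proj1 (rlK _) hi.
    exact: unm.
  + by split => // hi; exfalso; apply: h; exists i.
- by apply/rlP; exists b.
Qed.
Local Open Scope ring_scope.

Section EndRing.
Variables (R : pzRingType) (I : Type).
Local Notation F := (free_mod R I).

Lemma fm_eq (x y : F) : sval x = sval y -> x = y.
Proof.
case: x => x hx; case: y => y hy /= e; subst y.
by congr exist; exact: Prop_irrelevance.
Qed.

Lemma fm_eqP (x y : F) : (forall i, sval x i = sval y i) -> x = y.
Proof. by move=> h; apply: fm_eq; apply: funext. Qed.

Record endo := Endo { ef :> F -> F; ef_endo : is_endo ef }.

Lemma endo_eq (f g : endo) : (forall x, f x = g x) -> f = g.
Proof.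
case: f => f hf; case: g => g hg /= h.
have e : f = g by apply: funext.
subst g; congr Endo; exact: Prop_irrelevance.
Qed.

HB.instance Definition _ := gen_eqMixin endo.
HB.instance Definition _ := gen_choiceMixin endo.

Definition zF : F := exist _ (fun _ => 0) (fsupp0 R I).
Definition negF (x : F) : F := scaleF x (-1).

Lemma zero_endo : is_endo (fun _ : F => zF).
Proof. by split => *; apply: fm_eqP => i /=; rewrite ?addr0 ?mul0r. Qed.

Lemma add_endo (f g : endo) : is_endo (fun x => addF (f x) (g x)).
Proof.
case: (ef_endo f) => fa fs; case: (ef_endo g) => ga gs.
split => *; apply: fm_eqP => i /=; rewrite ?fa ?ga ?fs ?gs /=.
  by rewrite addrACA.
by rewrite mulrDl.
Qed.

Lemma neg_endo (f : endo) : is_endo (fun x => negF (f x)).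
Proof.
case: (ef_endo f) => fa fs.
split => *; apply: fm_eqP => i /=; rewrite ?fa ?fs /=.
  by rewrite mulrDl.
by rewrite !mulrN1 mulNr.
Qed.

Lemma mul_endo (f g : endo) : is_endo (fun x => f (g x)).
Proof.
case: (ef_endo f) => fa fs; case: (ef_endo g) => ga gs.
by split => *; rewrite ?ga ?fa ?gs ?fs.
Qed.

Lemma one_endo : is_endo (fun x : F => x).
Proof. by []. Qed.

Definition e0 := Endo zero_endo.
Definition eadd f g := Endo (add_endo f g).
Definition eneg f := Endo (neg_endo f).
Definition emul f g := Endo (mul_endo f g).
Definition e1 := Endo one_endo.

Lemma eaddA : associative eadd.
Proof. by move=> f g h; apply: endo_eq => x; apply: fm_eqP => i /=; rewrite addrA. Qed.
Lemma eaddC : commutative eadd.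
Proof. by move=> f g; apply: endo_eq => x; apply: fm_eqP => i /=; rewrite addrC. Qed.
Lemma eadd0 : left_id e0 eadd.
Proof. by move=> f; apply: endo_eq => x; apply: fm_eqP => i /=; rewrite add0r. Qed.
Lemma eaddN : left_inverse e0 eneg eadd.
Proof. by move=> f; apply: endo_eq => x; apply: fm_eqP => i /=; rewrite mulrN1 addNr. Qed.

HB.instance Definition _ := GRing.isZmodule.Build endo eaddA eaddC eadd0 eaddN.

Lemma emulA : associative emul.
Proof. by move=> f g h; apply: endo_eq. Qed.
Lemma emul1 : left_id e1 emul.
Proof. by move=> f; apply: endo_eq. Qed.
Lemma emulr1 : right_id e1 emul.
Proof. by move=> f; apply: endo_eq. Qed.
Lemma emulDl : left_distributive emul eadd.
Proof. by move=> f g h; apply: endo_eq. Qed.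
Lemma emulDr : right_distributive emul eadd.
Proof.
move=> h f g; apply: endo_eq => x /=.
by case: (ef_endo h) => ha _; rewrite ha.
Qed.

HB.instance Definition _ := GRing.Zmodule_isPzRing.Build endo emulA emul1 emulr1 emulDl emulDr.

Lemma mulE (f g : endo) x : (f * g) x = f (g x). Proof. by []. Qed.
Lemma addE (f g : endo) x : (f + g) x = addF (f x) (g x). Proof. by []. Qed.
Lemma oneE x : (1 : endo) x = x. Proof. by []. Qed.

End EndRing.
Definition role_eq (a b : role) : bool :=
  match a, b with rP, rP | rJ, rJ | rK, rK => true | _, _ => false end.
Lemma role_eqP : Equality.axiom role_eq.
Proof. by case; case; constructor. Qed.
HB.instance Definition _ := hasDecEq.Build role role_eqP.

Section Coord.
Variables (R : pzRingType) (I : Type).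
Local Notation F := (free_mod R I).

Definition cop_fun (src : I -> option I) (x : F) : I -> R :=
  fun i => match src i with Some l => sval x l | None => 0 end.

Lemma cop_supp (src dst : I -> option I)
  (H : forall i l, src i = Some l -> dst l = Some i) (x : F) : fsupp (cop_fun src x).
Proof.
case: (proj2_sig x) => n [g hg].
exists n, (fun k => match dst (g k) with Some i => i | None => g k end).
move=> i; rewrite /cop_fun; case e: (src i) => [l|] hi; last by [].
have [k hk] := hg l hi; exists k; by rewrite hk (H _ _ e).
Qed.

Definition copF src dst H (x : F) : F := exist _ (cop_fun src x) (@cop_supp src dst H x).

Lemma cop_endo src dst H : is_endo (@copF src dst H).
Proof.
split => *; apply: fm_eqP => i /=; rewrite /cop_fun /=; case: (src i) => //.
- by rewrite addr0.
- by rewrite mul0r.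
Qed.

Definition cop src dst H : endo R I := Endo (@cop_endo src dst H).

Lemma copE src dst H x i :
  sval (cop (src:=src) (dst:=dst) H x) i = match src i with Some l => sval x l | None => 0 end.
Proof. by []. Qed.

End Coord.

Lemma ifpsT (A : Type) (Q : Prop) (a b : A) : Q -> (if pselect Q then a else b) = a.
Proof. by case: pselect. Qed.
Lemma ifpsF (A : Type) (Q : Prop) (a b : A) : ~ Q -> (if pselect Q then a else b) = b.
Proof. by case: pselect. Qed.

Ltac pw2 := apply: endo_eq => x; apply: fm_eqP => i; rewrite /= /cop_fun /=.
Ltac pw := apply: endo_eq => x; apply: fm_eqP => i; rewrite ?mulE ?addE ?oneE ?copE.

Theorem theorem7 (R : pzRingType) (I : Type)
  (two_le_card : exists i j : I, i <> j) :
  End_free_n_clean R I 2.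
Proof.
move=> f hf.
case: two_le_card => i1 [i2 i12].
have [rl [pt [kel [p0 [R1 R2 R3 R4]]]]] := matching i12.
pose jp0 := pt p0.
have Rj0 : rl jp0 = rJ by case: (R1 _ R4).
pose srcD (r : role) i := if rl i == r then Some i else None.
have HD r : forall i l, srcD r i = Some l -> srcD r l = Some i.
  by move=> i l; rewrite /srcD; case: eqP => // h [<-]; rewrite h eqxx.
pose srcS i := if rl i == rP then Some (pt i) else None.
pose srcT i := if rl i == rJ then Some (pt i) else None.
have HS : forall i l, srcS i = Some l -> srcT l = Some i.
  move=> i l; rewrite /srcS /srcT; case: eqP => // h [<-].
  by have [-> ->] := R1 _ h; rewrite eqxx.
have HT : forall i l, srcT i = Some l -> srcS l = Some i.
  move=> i l; rewrite /srcS /srcT; case: eqP => // h [<-].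
  by have [-> ->] := R2 _ h; rewrite eqxx.
pose srcG i := if pselect (i = jp0) then kel else None.
pose srcH i := if rl i == rK then Some jp0 else None.
have HG : forall i l, srcG i = Some l -> srcH l = Some i.
  move=> i l; rewrite /srcG /srcH; case: pselect => // eij e.
  by rewrite (proj2 (R3 l) e) eqxx eij.
have HH : forall i l, srcH i = Some l -> srcG l = Some i.
  move=> i l; rewrite /srcH /srcG; case: eqP => // h [<-].
  rewrite ifpsT //; exact: (proj1 (R3 i) h).
pose P := @cop R _ _ _ (HD rP). pose J := @cop R _ _ _ (HD rJ).
pose K := @cop R _ _ _ (HD rK).
pose S := @cop R _ _ _ HS. pose Tt := @cop R _ _ _ HT.
pose SG := @cop R _ _ _ HG. pose TG := @cop R _ _ _ HH.
have zeroE (y : free_mod R I) l : sval ((0 : endo R I) y) l = 0 by [].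
have pp : P * P = P by pw2; unfold srcD, srcS, srcT, srcG, srcH, cop_fun; simpl; case E: (rl i); rewrite /= ?E //=.
have jj : J * J = J by pw2; unfold srcD, srcS, srcT, srcG, srcH, cop_fun; simpl; case E: (rl i); rewrite /= ?E //=.
have kk : K * K = K by pw2; unfold srcD, srcS, srcT, srcG, srcH, cop_fun; simpl; case E: (rl i); rewrite /= ?E //=.
have pj : P * J = 0 by pw2; unfold srcD, srcS, srcT, srcG, srcH, cop_fun; simpl; case E: (rl i); rewrite /= ?E //=.
have jp : J * P = 0 by pw2; unfold srcD, srcS, srcT, srcG, srcH, cop_fun; simpl; case E: (rl i); rewrite /= ?E //=.
have pk : P * K = 0 by pw2; unfold srcD, srcS, srcT, srcG, srcH, cop_fun; simpl; case E: (rl i); rewrite /= ?E //=.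
have kp : K * P = 0 by pw2; unfold srcD, srcS, srcT, srcG, srcH, cop_fun; simpl; case E: (rl i); rewrite /= ?E //=.
have jk : J * K = 0 by pw2; unfold srcD, srcS, srcT, srcG, srcH, cop_fun; simpl; case E: (rl i); rewrite /= ?E //=.
have kj : K * J = 0 by pw2; unfold srcD, srcS, srcT, srcG, srcH, cop_fun; simpl; case E: (rl i); rewrite /= ?E //=.
have sum1 : P + J + K = 1.
  by pw2; unfold srcD, srcS, srcT, srcG, srcH, cop_fun; simpl; case E: (rl i); rewrite /= ?E //=; rewrite ?addr0 ?add0r.
have ps : P * S = S by pw2; unfold srcD, srcS, srcT, srcG, srcH, cop_fun; simpl; case E: (rl i); rewrite /= ?E //=.
have sj : S * J = S.
  pw2; unfold srcD, srcS, srcT, srcG, srcH, cop_fun; simpl; case E: (rl i); rewrite /= ?E //=; by have [-> _] := R1 _ E.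
have jt : J * Tt = Tt by pw2; unfold srcD, srcS, srcT, srcG, srcH, cop_fun; simpl; case E: (rl i); rewrite /= ?E //=.
have tp : Tt * P = Tt.
  pw2; unfold srcD, srcS, srcT, srcG, srcH, cop_fun; simpl; case E: (rl i); rewrite /= ?E //=; by have [-> _] := R2 _ E.
have st : S * Tt = P.
  pw2; unfold srcD, srcS, srcT, srcG, srcH, cop_fun; simpl; case E: (rl i); rewrite /= ?E //=; by have [-> ->] := R1 _ E.
have ts : Tt * S = J.
  pw2; unfold srcD, srcS, srcT, srcG, srcH, cop_fun; simpl; case E: (rl i); rewrite /= ?E //=; by have [-> ->] := R2 _ E.
have jsg : J * SG = SG.
  pw2; unfold srcD, srcS, srcT, srcG, srcH, cop_fun; simpl; have [eij|ne] := pselect (i = jp0).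
    by rewrite eij Rj0 /= !ifpsT.
  by rewrite (ifpsF _ _ ne); case: (rl i) => //=; rewrite (ifpsF _ _ ne).
have sgk : SG * K = SG.
  pw2; unfold srcD, srcS, srcT, srcG, srcH, cop_fun; simpl; have [eij|ne] := pselect (i = jp0).
    rewrite eij !ifpsT //; case E: kel => [l|] //=.
    by rewrite (proj2 (R3 l) E).
  by rewrite !(ifpsF _ _ ne).
have tgj : TG * J = TG.
  by pw2; unfold srcD, srcS, srcT, srcG, srcH, cop_fun; simpl; case E: (rl i); rewrite /= ?E //=; rewrite Rj0.
have tgsg : TG * SG = K.
  pw2; unfold srcD, srcS, srcT, srcG, srcH, cop_fun; simpl; case E: (rl i); rewrite /= ?E //=; rewrite ifpsT //.
  by rewrite (proj1 (R3 i) E).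
have [e [u1 [u2 [ee [U1 [U2 fE]]]]]] := decomp pp jj kk pj jp pk kp jk kj sum1
  ps sj jt tp st ts jsg sgk tgj tgsg (Endo hf).
exists (ef e), (fun k : 'I_2 => if val k == 0%N then ef u1 else ef u2).
have unitP (u : endo R I) : unitT u -> endo_unit (ef u).
  move=> [v [h1 h2]]; split; first exact: ef_endo.
  exists (ef v); split; first exact: ef_endo.
  by split => y; rewrite -mulE ?h1 ?h2.
split.
  split; first exact: ef_endo.
  by move=> y; rewrite -mulE ee.
split.
  by move=> k; case: ifP => _; apply: unitP.
move=> y.
rewrite enum_ordSl enum_ordSl enum_ord0 /=.
have -> : f y = (e + u1 + u2) y by rewrite -fE.
apply: fm_eqP => i /=.
by rewrite [RHS]addrA [RHS]addrC addrA.
Qed.
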